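(* Consider a slotted system with diversity. There are $N$ users, $N_{sub}\ge2$ sub-carriers and slots $1,\dots,T$. In each slot the BS chooses one user via a user scheduling algorithm $\pi_u$ and one sub-carrier via a sub-carrier choosing algorithm $\pi_s$; these may be randomized and may depend on past adversarial actions. It then sends an update to the chosen user on the chosen sub-carrier. The adversary uses a blocking matrix $\sigma\in\{0,1\}^{N_{sub}\times T}$, where $\sigma_j(t)=0$ means sub-carrier $j$ is blocked in slot $t$. Feasibility means $\sum_{j,t}(1-\sigma_j(t))\le\alpha T$ and at most one sub-carrier is blocked per slot, where $0<\alpha<1$. Ages satisfy $a_i(1)=1$, $a_i(t+1)=1$ if user $i$ is chosen in slot $t$ on an unblocked sub-carrier, and $a_i(t+1)=a_i(t)+1$ otherwise. Let $\Delta^{\pi_u,\pi_s,\sigma}=\frac1T\sum_{t=1}^T\frac1N\sum_i\mathbb E[a_i(t)]$ and $\Delta^*(T)=\sup_\sigma\inf_{\pi_u,\pi_s}\Delta^{\pi_u,\pi_s,\sigma}$. Then $\liminf_{T\to\infty}\Delta^*(T)\ge\frac{N+1}{2}$. *)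

(* Defs.v *)
From HB Require Import structures.
From mathcomp Require Import all_boot all_order all_algebra.
From mathcomp Require Import all_classical all_reals.
From mathcomp Require Import ereal sequences.
Set Implicit Arguments. Unset Strict Implicit. Unset Printing Implicit Defensive.
Import Order.TTheory GRing.Theory Num.Theory.
Local Open Scope ring_scope.

(* Slots are numbered 1..T (natural numbers).
   A blocking pattern: sigma t j = false  <->  sub-carrier j blocked in slot t
   (i.e. sigma_j(t) = 0). Only the values at slots 1..T matter. *)
Definition blocking (Nsub : nat) := nat -> 'I_Nsub -> bool.

Definition feasible (R : realType) (Nsub T : nat) (alpha : R) (sigma : blocking Nsub) : Prop :=
  (((\sum_(1 <= t < T.+1) #|[set j : 'I_Nsub | ~~ sigma t j]|)%N)%:R <= alpha * T%:R)
  /\ (forall t, (1 <= t <= T)%N -> (#|[set j : 'I_Nsub | ~~ sigma t j]| <= 1)%N).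

(* A deterministic joint policy (pi_u, pi_s): in slot t it chooses a user and a
   sub-carrier as a function of the adversarial actions. *)
Definition det_policy (N Nsub : nat) := nat -> blocking Nsub -> 'I_N * 'I_Nsub.

Definition causal (N Nsub : nat) (f : det_policy N Nsub) : Prop :=
  forall t (s1 s2 : blocking Nsub),
    (forall s j, (s < t)%N -> s1 s j = s2 s j) -> f t s1 = f t s2.

(* age f sigma i n = a_i(n+1):  a_i(1) = 1,
   a_i(t+1) = 1 if user i is chosen in slot t on an unblocked sub-carrier,
   a_i(t+1) = a_i(t) + 1 otherwise. *)
Fixpoint age (N Nsub : nat) (f : det_policy N Nsub) (sigma : blocking Nsub)
    (i : 'I_N) (n : nat) : nat :=
  match n with
  | 0 => 1
  | n'.+1 =>
      let c := f n'.+1 sigma in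
      if (c.1 == i) && sigma n'.+1 c.2 then 1 else (age f sigma i n').+1
  end.

Definition avg_age (R : realType) (N Nsub T : nat) (f : det_policy N Nsub)
    (sigma : blocking Nsub) : R :=
  T%:R^-1 * \sum_(1 <= t < T.+1) (N%:R^-1 * \sum_(i < N) ((age f sigma i t.-1)%:R : R)).

(* Expected average age values achievable by (possibly randomized) causal
   policies against sigma: a randomized policy is a probability distribution
   (finite randomness Omega, weights p) over causal deterministic policies;
   the expectation is taken over that randomness. *)
Definition achievable (R : realType) (N Nsub T : nat) (sigma : blocking Nsub) : set R :=
  [set v | exists (Omega : finType) (p : Omega -> R) (pol : Omega -> det_policy N Nsub),
      (forall w, 0 <= p w) /\ \sum_(w : Omega) p w = 1 /\
      (forall w, causal (pol w)) /\
      v = \sum_(w : Omega) p w * @avg_age R N Nsub T (pol w) sigma].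

Definition Delta_star (R : realType) (N Nsub : nat) (alpha : R) (T : nat) : \bar R :=
  ereal_sup [set ereal_inf [set (v%:E) | v in @achievable R N Nsub T sigma]
            | sigma in [set sigma : blocking Nsub | feasible T alpha sigma]].

(* Main.v *)
Require Import Defs.
From HB Require Import structures.
From mathcomp Require Import all_boot all_order all_algebra.
From mathcomp Require Import all_classical all_reals.
From mathcomp Require Import ereal sequences topology normedtype.
From mathcomp Require Import zify ring lra.
Import Order.TTheory GRing.Theory Num.Theory.
Section Comb.
Variables (N Nsub : nat) (f : det_policy N Nsub) (s : blocking Nsub).

Lemma age_count n : forall k, (k <= n)%N ->
  (#|[set i | (age f s i n <= k)%N]| <= k)%N.
Proof.
elim: n => [|n IH] k.
  by case: k => // _; apply: eq_leq; apply/eqP; rewrite cards_eq0; apply/eqP/setP => i; rewrite !inE.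
case: k => [|k] hk.
  apply: eq_leq; apply/eqP; rewrite cards_eq0; apply/eqP/setP => i.
  by rewrite !inE /=; case: ifP.
have sub : [set i | (age f s i n.+1 <= k.+1)%N] \subset
   [set (f n.+1 s).1] :|: [set i | (age f s i n <= k)%N].
  apply/fintype.subsetP => i; rewrite !inE /=.
  case: ifP => [/andP[/eqP -> _] _|_]; first by rewrite eqxx.
  by rewrite ltnS => ->; rewrite orbT.
apply: leq_trans (subset_leq_card sub) _.
apply: leq_trans (leq_card_setU _ _) _.
by rewrite cards1 add1n ltnS IH.
Qed.

Lemma sum_lt_min (a : nat) M : (\sum_(k < M) (k < a)%N)%N = minn M a.
Proof.
elim: M => [|M IH]; first by rewrite big_ord0 min0n.
rewrite big_ord_recr /= IH; lia.
Qed.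

Lemma sum_ge n : (N <= n.+1)%N ->
  (N * N.+1 <= 2 * \sum_(i < N) age f s i n)%N.
Proof.
move=> hN.
have h1 : (\sum_(k < N) (N - k) <= \sum_(i < N) age f s i n)%N.
  apply: (@leq_trans (\sum_(i < N) \sum_(k < N) (k < age f s i n)%N)); last first.
    by apply: leq_sum => i _; rewrite sum_lt_min geq_minr.
  rewrite exchange_big /=; apply: leq_sum => k _.
  have e : (\sum_(i < N) (k < age f s i n)%N = #|[set i | (k < age f s i n)%N]|)%N.
    rewrite -sum1_card [RHS]big_mkcond /=; apply: eq_bigr => i _.
    by rewrite !inE; case: (_ < _)%N.
  have c := cardsC [set i | (age f s i n <= k)%N].
  have ee : (~: [set i | (age f s i n <= k)%N]) = [set i | (k < age f s i n)%N].
    by apply/setP => i; rewrite !inE -ltnNge.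
  rewrite ee in c.
  rewrite card_ord in c.
  rewrite e; have := @age_count n k ltac:(have := ltn_ord k; lia).
  lia.
have h2 : forall M, (2 * \sum_(k < M) (M - k) = M * M.+1)%N.
  elim=> [|M IH]; first by rewrite big_ord0.
  rewrite big_ord_recl /= subn0.
  under eq_bigr do rewrite /bump /= add1n subSS.
  rewrite mulnDr IH; lia.
by rewrite -h2 leq_mul2l h1 orbT.
Qed.

Lemma sum_tot T : ((T.+1 - N) * (N * N.+1) <=
   2 * \sum_(1 <= t < T.+1) \sum_(i < N) age f s i t.-1)%N.
Proof.
elim: T => [|T IH].
  suff -> : ((1 - N) * (N * N.+1) = 0)%N by [].
  by case: (N) => [|m]; rewrite ?muln0 // subSS sub0n.
rewrite big_nat_recr //= mulnDr.
case: (leqP N T.+1) => h.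
  have -> : (T.+2 - N = (T.+1 - N).+1)%N by lia.
  rewrite mulSn addnC; exact: leq_add IH (@sum_ge T h).
have -> : (T.+2 - N = 0)%N by lia.
by rewrite mul0n.
Qed.

End Comb.
Local Open Scope ring_scope.
Lemma avg_lb (R : realType) N Nsub T (f : det_policy N Nsub) s : (0 < N)%N -> (0 < T)%N ->
  ((T.+1 - N)%:R * (N.+1)%:R / (2 * T%:R) : R) <= @avg_age R N Nsub T f s.
Proof.
move=> N0 T0.
have H := @sum_tot N Nsub f s T.
set S := (\sum_(1 <= t < T.+1) _)%N in H.
have HR : ((T.+1 - N)%:R * (N%:R * (N.+1)%:R) <= 2 * S%:R :> R).
  by rewrite -!natrM ler_nat.
have -> : @avg_age R N Nsub T f s = T%:R^-1 * (N%:R^-1 * S%:R) :> R.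
  rewrite /avg_age /S -mulr_sumr natr_sum; congr (_ * (_ * _)).
  by apply: eq_bigr => t _; rewrite natr_sum.
have Tp : 0 < T%:R :> R by rewrite ltr0n.
have Np : 0 < N%:R :> R by rewrite ltr0n.
move: HR; set a := (T.+1 - N)%:R; set b := (N.+1)%:R; set c := S%:R => HR.
have -> : a * b / (2 * T%:R) = (a * (N%:R * b)) / 2 * (T%:R^-1 * N%:R^-1) :> R.
  by field; rewrite ?gt_eqF.
have -> : T%:R^-1 * (N%:R^-1 * c) = c * (T%:R^-1 * N%:R^-1) :> R by ring.
apply: ler_wpM2r; first by rewrite mulr_ge0 // invr_ge0 ltW.
by rewrite ler_pdivrMr // [c * _]mulrC.
Qed.
Lemma L_ge (R : realType) N k : (0 < N)%N -> (N <= k)%N ->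
  (N.+1)%:R / 2 - N%:R * (N.+1)%:R / (2 * k%:R) <=
  ((k.+1 - N)%:R * (N.+1)%:R / (2 * k%:R) : R).
Proof.
move=> N0 Nk.
have kp : 0 < k%:R :> R by rewrite ltr0n; lia.
rewrite natrB; last by lia.
have -> : (k.+1%:R - N%:R) * N.+1%:R / (2 * k%:R) =
  (N.+1)%:R / 2 - N%:R * (N.+1)%:R / (2 * k%:R) + (N.+1)%:R / (2 * k%:R) :> R.
  by rewrite -natr1; field; rewrite gt_eqF.
by rewrite lerDl divr_ge0 // mulr_ge0 // ltW.
Qed.

Lemma Dstar_ge (R : realType) N Nsub (alpha : R) T : (0 < N)%N -> (0 < T)%N -> 0 < alpha ->
  (((T.+1 - N)%:R * (N.+1)%:R / (2 * T%:R) : R)%:E <= Delta_star N Nsub alpha T)%E.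
Proof.
move=> N0 T0 a0.
set L := (_ / _ : R).
apply: (@le_trans _ _ (ereal_inf [set (v%:E) | v in @achievable R N Nsub T (fun _ _ => true)])).
  apply: le_ereal_inf_tmp => _ [v [Om [p [pol [p0 [p1 [cau ->]]]]]] <-].
  rewrite lee_fin.
  apply: (@le_trans _ _ (\sum_(w : Om) p w * L)).
    by rewrite -mulr_suml p1 mul1r.
  apply: ler_sum => w _; apply: ler_wpM2l => //.
  exact: avg_lb.
apply: ereal_sup_ubound; exists (fun _ _ => true) => //.
split.
  have -> : (\sum_(1 <= t < T.+1) #|[set j : 'I_Nsub | ~~ true]|)%N = 0%N.
    by rewrite big1 // => t _; apply/eqP; rewrite cards_eq0; apply/eqP/setP => j; rewrite !inE.
  by rewrite mulr_ge0 // ltW.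
move=> t _.
suff -> : [set j : 'I_Nsub | ~~ true] = finset.set0 by rewrite cards0.
by apply/setP => j; rewrite !inE.
Qed.
Theorem theorem10 (R : realType) (N Nsub : nat) (alpha : R) :
  (0 < N)%N -> (2 <= Nsub)%N -> 0 < alpha < 1 ->
  (((N.+1)%:R / 2 : R)%:E <= limn_einf (fun T : nat => Delta_star N Nsub alpha T))%E.
Proof.
move=> N0 _ /andP[a0 _].
apply/lee_subgt0Pr => e e0.
rewrite limn_einf_lim; apply: lime_ge; first exact: is_cvg_einfs.
set X := (N%:R * (N.+1)%:R : R).
have X0 : 0 <= X / (2 * e) by rewrite divr_ge0 // ?mulr_ge0 // ltW.
pose M := maxn N (Num.bound (X / (2 * e))).
exists M => // n /= Mn.
apply: le_ereal_inf_tmp => _ [k /= nk <-].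
have Mk : (M <= k)%N by apply: leq_trans nk.
have Nk : (N <= k)%N by apply: leq_trans Mk; apply: leq_maxl.
have k0 : (0 < k)%N by apply: leq_trans Nk.
apply: le_trans; last exact: (@Dstar_ge R N Nsub alpha k N0 k0 a0).
rewrite -EFinB lee_fin; apply: le_trans (@L_ge R N k N0 Nk).
rewrite lerB // ler_pdivrMr ?mulr_gt0 ?ltr0n //.
have := archi_boundP X0.
rewrite ltr_pdivrMr ?mulr_gt0 // => /ltW /le_trans; apply.
have kb : (Num.bound (X / (2 * e)) <= k)%N by apply: leq_trans Mk; apply: leq_maxr.
rewrite [e * _]mulrC mulrA; apply: ler_wpM2r; first exact: ltW.
by rewrite mulrC; apply: ler_wpM2l => //; rewrite ler_nat.
Qed.
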